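(* Let $B^0=\bigcup_{n\in\mathbb{Z}}\{(n,k):\ k=0,1,\dots,2^{|n|}\}\subset\mathbb{H}$. Then $\bar{\mathcal H}_{B^0}(x)=0$ for all $x\in B^0$.
   Context: $\mathbb{H}=\{(x_1,x_2)\in\mathbb{Z}^2:\ x_2\ge 0\}$ and $L_n=\{(x_1,n):x_1\in\mathbb{Z}\}$. $(S_n)_{n\ge0}$ is a simple random walk on $\mathbb{Z}^2$; $P_z$ denotes its law started at $z$. For $A\subset\mathbb{Z}^2$, $\bar\tau_A=\min\{n\ge0: S_n\in A\}$. For $B\subset\mathbb{H}$, $x\in B$ and $N\ge1$, define $$\bar{\mathcal H}_{B,N}(x)=\sum_{z\in L_N\setminus B}P_z\big(S_{\bar\tau_{B\cup L_0}}=x\big).$$ It is known that the limit $\bar{\mathcal H}_B(x)=\lim_{N\to\infty}\bar{\mathcal H}_{B,N}(x)$ exists and is finite for every $B\subset\mathbb{H}$ and $x\in B$; it is called the stationary harmonic measure of $x$ with respect to $B$. *)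

(* Defs.v *)
From Stdlib Require Import Reals ZArith List Bool.
Import ListNotations.
Open Scope R_scope.

Definition pt := (Z * Z)%type.

Definition pt_eqb (a b : pt) : bool :=
  (Z.eqb (fst a) (fst b) && Z.eqb (snd a) (snd b))%bool.

Definition step (d : nat) : pt :=
  match d with
  | 0%nat => (1%Z, 0%Z) | 1%nat => ((-1)%Z, 0%Z)
  | 2%nat => (0%Z, 1%Z) | _ => (0%Z, (-1)%Z)
  end.

Definition padd (a b : pt) : pt := ((fst a + fst b)%Z, (snd a + snd b)%Z).

(* All 4^k step sequences of length k (each equally likely, prob 4^-k). *)
Fixpoint all_paths (k : nat) : list (list nat) :=
  match k with
  | O => [ [] ]
  | S k' => flat_map (fun p => map (fun d => d :: p) (seq 0 4)) (all_paths k')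
  end.

(* [hits A z ds x]: the walk started at z following steps ds has
   its first visit to A (times 0,1,...) exactly at time |ds|, at the point x. *)
Fixpoint hits (A : pt -> bool) (z : pt) (ds : list nat) (x : pt) : bool :=
  match ds with
  | [] => (A z && pt_eqb z x)%bool
  | d :: ds' => (negb (A z) && hits A (padd z (step d)) ds' x)%bool
  end.

(* P_z( bar tau_A = k, S_{bar tau_A} = x ) *)
Definition hit_prob_k (A : pt -> bool) (z x : pt) (k : nat) : R :=
  INR (length (filter (fun ds => hits A z ds x) (all_paths k))) / 4 ^ k.

(* Partial sum over k = 0..n of the above; P_z(S_{bar tau_A} = x) is its
   limit (nondecreasing in n). *)
Definition hit_prob_upto (A : pt -> bool) (z x : pt) (n : nat) : R :=
  fold_right Rplus 0 (map (hit_prob_k A z x) (seq 0 (S n))).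

Definition inH (z : pt) : bool := Z.leb 0 (snd z).
Definition onL0 (z : pt) : bool := Z.eqb (snd z) 0.

Definition union (A B : pt -> bool) : pt -> bool := fun z => (A z || B z)%bool.

(* Truncation of bar H_{B,N}(x): z ranges over (z1, N) with |z1| <= M,
   z not in B, and hitting time at most n. *)
Definition Hbar_trunc (B : pt -> bool) (N : nat) (x : pt) (n M : nat) : R :=
  fold_right Rplus 0
    (map (fun i : nat =>
            let z : pt := ((Z.of_nat i - Z.of_nat M)%Z, Z.of_nat N) in
            if B z then 0 else hit_prob_upto (union B onL0) z x n)
         (seq 0 (S (2 * M)))).

(* [Hbar_N_is B N x h]: h = bar H_{B,N}(x), the (nonnegative-term) sum
   over z in L_N \ B of P_z(S_{bar tau_{B u L_0}} = x), i.e. the supremum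
   of its finite truncations. *)
Definition Hbar_N_is (B : pt -> bool) (N : nat) (x : pt) (h : R) : Prop :=
  is_lub (fun r => exists n M : nat, r = Hbar_trunc B N x n M) h.

Definition B0 (z : pt) : bool :=
  (Z.leb 0 (snd z) && Z.leb (snd z) (2 ^ Z.abs (fst z)))%bool.

(* Main.v *)
Require Import Defs.
From Stdlib Require Import Reals ZArith List Bool Lra Lia Psatz.
Import ListNotations.
Open Scope R_scope.

Definition sumR {T} (l : list T) (F : T -> R) := fold_right Rplus 0 (map F l).

Lemma count_flat (Q : list nat -> bool) (L : list (list nat)) :
  length (filter Q (flat_map (fun p => map (fun d => d :: p) (seq 0 4)) L)) =
  (length (filter (fun p => Q (0%nat::p)) L) + length (filter (fun p => Q (1%nat::p)) L)
  + length (filter (fun p => Q (2%nat::p)) L) + length (filter (fun p => Q (3%nat::p)) L))%nat.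
Proof.
  induction L as [|p L IH]; [reflexivity|].
  cbn [flat_map]. rewrite filter_app, length_app, IH. simpl.
  destruct (Q (0%nat::p)), (Q (1%nat::p)), (Q (2%nat::p)), (Q (3%nat::p)); simpl; lia.
Qed.

Lemma filter_false_len {T} (L : list T) : length (filter (fun _ => false) L) = 0%nat.
Proof. induction L; simpl; auto. Qed.

Lemma hpk_S (B : pt -> bool) z x k : B z = false ->
  hit_prob_k B z x (S k) = /4 * (hit_prob_k B (padd z (step 0)) x k + hit_prob_k B (padd z (step 1)) x k + hit_prob_k B (padd z (step 2)) x k + hit_prob_k B (padd z (step 3)) x k).
Proof.
  intros H. unfold hit_prob_k. simpl all_paths. rewrite count_flat.
  simpl hits. rewrite H. simpl negb. simpl andb.
  rewrite !plus_INR. simpl pow. field. apply pow_nonzero. lra.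
Qed.

Lemma hpk_S_true (B : pt -> bool) z x k : B z = true -> hit_prob_k B z x (S k) = 0.
Proof.
  intros H. unfold hit_prob_k. simpl all_paths. rewrite count_flat.
  simpl hits. rewrite H. simpl negb. simpl andb. rewrite !filter_false_len. simpl. lra.
Qed.

Lemma hpk_0 (B : pt -> bool) z x : hit_prob_k B z x 0 = if (B z && pt_eqb z x)%bool then 1 else 0.
Proof. unfold hit_prob_k. simpl. destruct (B z && pt_eqb z x)%bool; simpl; lra. Qed.


Lemma sum_zero {T} (l : list T) F : (forall k, F k = 0) -> sumR l F = 0.
Proof. intros H; induction l; simpl; auto. unfold sumR in *; simpl. rewrite H, IHl; lra. Qed.

Lemma sum4 {T} (l : list T) a b c d :
  sumR l (fun k => /4 * (a k + b k + c k + d k)) = /4 * (sumR l a + sumR l b + sumR l c + sumR l d).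
Proof. unfold sumR; induction l; simpl; [lra|]. rewrite IHl. ring. Qed.

Lemma upto_shift (B : pt -> bool) z x n :
  hit_prob_upto B z x (S n) = hit_prob_k B z x 0 + sumR (seq 0 (S n)) (fun k => hit_prob_k B z x (S k)).
Proof.
  unfold hit_prob_upto, sumR. change (seq 0 (S (S n))) with (0%nat :: seq 1 (S n)).
  rewrite <- seq_shift. cbn [map fold_right]. rewrite map_map. reflexivity.
Qed.

Lemma upto_A (B : pt -> bool) z x n : B z = true ->
  hit_prob_upto B z x n = if pt_eqb z x then 1 else 0.
Proof.
  intros H. destruct n.
  - unfold hit_prob_upto. simpl. rewrite hpk_0, H. simpl. destruct (pt_eqb z x); lra.
  - rewrite upto_shift, hpk_0, H, sum_zero. simpl. destruct (pt_eqb z x); lra.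
    intros k; apply hpk_S_true; auto.
Qed.

Lemma upto_F (B : pt -> bool) z x n : B z = false ->
  hit_prob_upto B z x (S n) = /4 * (hit_prob_upto B (padd z (step 0)) x n + hit_prob_upto B (padd z (step 1)) x n + hit_prob_upto B (padd z (step 2)) x n + hit_prob_upto B (padd z (step 3)) x n).
Proof.
  intros H. rewrite upto_shift, hpk_0, H. simpl andb.
  unfold sumR. rewrite (map_ext _ _ (fun k => hpk_S B z x k H)).
  fold (sumR (seq 0 (S n)) (fun k => /4 * (hit_prob_k B (padd z (step 0)) x k + hit_prob_k B (padd z (step 1)) x k + hit_prob_k B (padd z (step 2)) x k + hit_prob_k B (padd z (step 3)) x k))).
  rewrite sum4. unfold hit_prob_upto, sumR. lra.
Qed.

Lemma upto_F0 (B : pt -> bool) z x : B z = false -> hit_prob_upto B z x 0 = 0.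
Proof. intros H. unfold hit_prob_upto. simpl. rewrite hpk_0, H. simpl. lra. Qed.

Lemma upto_nonneg (B : pt -> bool) z x n : 0 <= hit_prob_upto B z x n.
Proof.
  unfold hit_prob_upto. induction (seq 0 (S n)); simpl; [lra|].
  apply Rplus_le_le_0_compat; auto. unfold hit_prob_k.
  apply Rmult_le_pos; [apply pos_INR|]. apply Rlt_le, Rinv_0_lt_compat, pow_lt; lra.
Qed.

Definition fr (n u : R) : R := / (u*(u+1)) - n*n*(3/((u-1)*u*(u+1)*(u+2))).

Lemma fr_eq n u : u > 1 -> fr n u = ((u-1)*(u+2) - 3*(n*n)) / ((u-1)*u*(u+1)*(u+2)).
Proof. intros H. unfold fr. field. repeat split; lra. Qed.

Lemma fr_pos n u : u > 1 -> 3*(n*n) < (u-1)*(u+2) -> 0 < fr n u.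
Proof.
  intros H1 H2. rewrite fr_eq by lra. apply Rdiv_lt_0_compat; [lra|].
  repeat apply Rmult_lt_0_compat; lra.
Qed.

Lemma fr_le n u : u > 1 -> fr n u <= / (u*(u+1)).
Proof.
  intros H. unfold fr. assert (0 <= n*n*(3/((u-1)*u*(u+1)*(u+2)))); [|lra].
  apply Rmult_le_pos; [nra|]. apply Rlt_le, Rdiv_lt_0_compat; [lra|].
  repeat apply Rmult_lt_0_compat; lra.
Qed.

Lemma fr_super n u : u > 2 ->
  fr (n+1) u + fr (n-1) u + fr n (u+1) + fr n (u-1) <= 4 * fr n u.
Proof.
  intros H.
  assert (E : 4 * fr n u - (fr (n+1) u + fr (n-1) u + fr n (u+1) + fr n (u-1)) =
     n*n*60/((u-2)*(u-1)*u*(u+1)*(u+2)*(u+3))).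
  { unfold fr. field. repeat split; lra. }
  assert (0 <= n*n*60/((u-2)*(u-1)*u*(u+1)*(u+2)*(u+3))); [|lra].
  apply Rmult_le_pos; [nra|]. apply Rlt_le, Rinv_0_lt_compat.
  repeat apply Rmult_lt_0_compat; lra.
Qed.

Lemma sq_le_pow_nat m : (m*m <= 2*2^m)%nat.
Proof.
  induction m as [|m IH]; [simpl; lia|].
  destruct (Nat.lt_ge_cases m 3) as [Hm|Hm].
  - destruct m as [|[|[|]]]; simpl; lia.
  - rewrite Nat.pow_succ_r'. nia.
Qed.

Lemma sq_le_pow (k : Z) : (0 <= k)%Z -> (k*k <= 2*2^k)%Z.
Proof.
  intros H. rewrite <- (Z2Nat.id k H).
  replace (2 ^ Z.of_nat (Z.to_nat k))%Z with (Z.of_nat (2 ^ Z.to_nat k)) by (rewrite Nat2Z.inj_pow; reflexivity).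
  pose proof (sq_le_pow_nat (Z.to_nat k)). lia.
Qed.

Definition cx (x : pt) : R := IZR (2 * Z.abs (fst x) + 4).
Definition ffx (x z : pt) : R := fr (IZR (fst z)) (IZR (snd z) + cx x).
Definition inF (z : pt) : Prop := (2 ^ Z.abs (fst z) < snd z)%Z.
Definition AA := union B0 onL0.

Lemma pow_ge1 k : (1 <= 2 ^ Z.abs k)%Z.
Proof. pose proof (Z.pow_pos_nonneg 2 (Z.abs k)). lia. Qed.

Lemma inF_A z : inF z -> AA z = false.
Proof.
  destruct z as [n y]. unfold inF, AA, union, B0, onL0; simpl. intros H.
  pose proof (pow_ge1 n).
  destruct (Z.leb_spec 0 y), (Z.leb_spec y (2^Z.abs n)), (Z.eqb_spec y 0); simpl; try reflexivity; lia.
Qed.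

Lemma A_inF z : (0 <= snd z)%Z -> AA z = false -> inF z.
Proof.
  destruct z as [n y]. unfold inF, AA, union, B0, onL0; simpl. intros H.
  destruct (Z.leb_spec 0 y), (Z.leb_spec y (2^Z.abs n)), (Z.eqb_spec y 0); simpl; try discriminate; lia.
Qed.

Lemma cx_ge4 x : 4 <= cx x.
Proof. unfold cx. apply IZR_le. lia. Qed.

Lemma pos_crit x n y : (1 <= y)%Z -> (2 ^ Z.abs n <= 2 * y)%Z -> 0 < ffx x (n, y).
Proof.
  intros H1 H2. unfold ffx; simpl. pose proof (cx_ge4 x).
  assert (Hy : 1 <= IZR y) by (apply IZR_le; lia).
  assert (Hn : (n*n <= 4*y)%Z).
  { pose proof (sq_le_pow (Z.abs n) (Z.abs_nonneg n)).
    destruct (Z.abs_spec n) as [[_ E]|[_ E]]; rewrite E in *; nia. }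
  apply IZR_le in Hn. rewrite mult_IZR, mult_IZR in Hn.
  apply fr_pos. lra. generalize dependent (cx x). generalize dependent (IZR n). generalize dependent (IZR y). intros r Hy r0 Hn r1 H. clear H1 H2.
  assert (0 <= (r1-4)*(r+r1+r+4)) by (apply Rmult_le_pos; lra). assert (0 <= (r-2)*(r-2)) by (apply Rle_0_sqr).
  ring_simplify. ring_simplify in H0. ring_simplify in H1. lra.
Qed.

Lemma fx_pos x : (0 <= snd x)%Z -> 0 < ffx x x.
Proof.
  destruct x as [a b]. simpl. intros Hb. unfold ffx, cx. cbn [fst snd].
  assert (Ec: IZR (2*Z.abs a+4) = 2*IZR(Z.abs a)+4) by (rewrite plus_IZR, mult_IZR; reflexivity).
  rewrite Ec. apply IZR_le in Hb. pose proof (IZR_le _ _ (Z.abs_nonneg a)).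
  assert (E : IZR a * IZR a = IZR (Z.abs a) * IZR (Z.abs a)).
  { rewrite <- !mult_IZR. f_equal. destruct (Z.abs_spec a) as [[_ E]|[_ E]]; rewrite E; ring. }
  set (A := IZR (Z.abs a)) in *. set (ra := IZR a) in *. set (rb := IZR b) in *.
  apply fr_pos. lra. rewrite E.
  assert (0 <= rb*rb) by apply Rle_0_sqr. assert (0 <= rb*A) by (apply Rmult_le_pos; lra).
  assert (0 <= A*A) by apply Rle_0_sqr.
  ring_simplify. lra.
Qed.

Lemma pow_mono_abs a b : (Z.abs a <= Z.abs b + 1)%Z -> (2 ^ Z.abs a <= 2 * 2 ^ Z.abs b)%Z.
Proof.
  intros H. rewrite <- Z.pow_succ_r by lia. apply Z.pow_le_mono_r; lia.
Qed.

Lemma nb_pos x z d : inF z -> (d < 4)%nat -> 0 < ffx x (padd z (step d)) /\ (0 <= snd (padd z (step d)))%Z.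
Proof.
  destruct z as [n y]; unfold inF; simpl; intros H Hd.
  pose proof (pow_ge1 n).
  destruct d as [|[|[|[|]]]]; try lia; unfold padd, step; simpl; split; try lia; apply pos_crit; try lia. all: rewrite ?Z.add_0_r.
  - pose proof (pow_mono_abs (n+1) n ltac:(lia)). lia.
  - pose proof (pow_mono_abs (n+-1) n ltac:(lia)). lia.
  - lia.
  - lia.
Qed.

Lemma f_nb x n y :
  ffx x (padd (n,y) (step 0)) = fr (IZR n + 1) (IZR y + cx x) /\
  ffx x (padd (n,y) (step 1)) = fr (IZR n - 1) (IZR y + cx x) /\
  ffx x (padd (n,y) (step 2)) = fr (IZR n) (IZR y + cx x + 1) /\
  ffx x (padd (n,y) (step 3)) = fr (IZR n) (IZR y + cx x - 1).
Proof.
  unfold ffx, padd, step; simpl; rewrite !plus_IZR; repeat split; f_equal; simpl; try ring.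
Qed.

Lemma main_bound x : (0 <= snd x)%Z -> forall n z, inF z ->
  hit_prob_upto AA z x n <= ffx x z / ffx x x.
Proof.
  intros Hx. pose proof (fx_pos x Hx) as Hfx.
  assert (Hz : forall z, inF z -> 0 < ffx x z).
  { intros [n y] H. unfold inF in H; simpl in H. apply pos_crit; pose proof (pow_ge1 n); lia. }
  induction n as [|n IH]; intros z H.
  - rewrite upto_F0 by (apply inF_A; auto). apply Rlt_le, Rdiv_lt_0_compat; auto.
  - rewrite upto_F by (apply inF_A; auto).
    assert (Hnb : forall d, (d < 4)%nat -> hit_prob_upto AA (padd z (step d)) x n <= ffx x (padd z (step d)) / ffx x x).
    { intros d Hd. destruct (nb_pos x z d H Hd) as [P1 P2].
      destruct (AA (padd z (step d))) eqn:E.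
      - rewrite upto_A by auto. destruct (pt_eqb (padd z (step d)) x) eqn:E2.
        + destruct (padd z (step d)) as [p q], x as [a b]. unfold pt_eqb in E2; simpl in E2.
          apply andb_prop in E2. destruct E2 as [E3 E4]. apply Z.eqb_eq in E3, E4. subst.
          right. field. lra.
        + apply Rlt_le, Rdiv_lt_0_compat; auto.
      - apply IH. apply A_inF; auto. }
    pose proof (Hnb 0%nat ltac:(lia)). pose proof (Hnb 1%nat ltac:(lia)).
    pose proof (Hnb 2%nat ltac:(lia)). pose proof (Hnb 3%nat ltac:(lia)).
    destruct z as [n0 y]. destruct (f_nb x n0 y) as (E0 & E1 & E2 & E3).
    rewrite E0, E1, E2, E3 in *.
    assert (S : fr (IZR n0 + 1) (IZR y + cx x) + fr (IZR n0 - 1) (IZR y + cx x) + fr (IZR n0) (IZR y + cx x + 1) + fr (IZR n0) (IZR y + cx x - 1) <= 4 * ffx x (n0, y)).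
    { unfold ffx; simpl. apply fr_super. unfold inF in H; simpl in H. pose proof (pow_ge1 n0).
      assert (1 <= IZR y) by (apply IZR_le; lia). pose proof (cx_ge4 x). lra. }
    unfold Rdiv in *. 
    apply Rle_trans with (/4 * ((fr (IZR n0 + 1) (IZR y + cx x) + fr (IZR n0 - 1) (IZR y + cx x) + fr (IZR n0) (IZR y + cx x + 1) + fr (IZR n0) (IZR y + cx x - 1)) * / ffx x x)).
    + lra.
    + assert (0 < / ffx x x) by (apply Rinv_0_lt_compat; auto).
      nra.
Qed.

Lemma sum_le {T} (l : list T) F G : (forall i, F i <= G i) -> sumR l F <= sumR l G.
Proof. intros H; unfold sumR; induction l; simpl; [lra|]. pose proof (H a); lra. Qed.

Lemma sum_nonneg {T} (l : list T) F : (forall i, 0 <= F i) -> 0 <= sumR l F.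
Proof. intros H; unfold sumR; induction l; simpl; [lra|]. pose proof (H a); lra. Qed.

Lemma count_le (K : R) (M N : Z) : 0 <= K -> forall len a,
  sumR (seq a len) (fun i => if (Z.abs (Z.of_nat i - M) <? N)%Z then K else 0)
  <= K * IZR (Z.max 0 (Z.min (Z.of_nat a + Z.of_nat len) (M + N) - Z.max (Z.of_nat a) (M - N + 1))).
Proof.
  intros HK. induction len as [|len IH]; intros a.
  - unfold sumR; simpl. apply Rmult_le_pos; auto. apply IZR_le; lia.
  - unfold sumR in *. cbn [seq map fold_right]. specialize (IH (S a)).
    destruct (Z.ltb_spec (Z.abs (Z.of_nat a - M)) N).
    + replace (Z.max 0 (Z.min (Z.of_nat a + Z.of_nat (S len)) (M + N) - Z.max (Z.of_nat a) (M - N + 1)))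
        with (1 + Z.max 0 (Z.min (Z.of_nat (S a) + Z.of_nat len) (M + N) - Z.max (Z.of_nat (S a)) (M - N + 1)))%Z by lia.
      rewrite plus_IZR. lra.
    + apply Rle_trans with (K * IZR (Z.max 0 (Z.min (Z.of_nat (S a) + Z.of_nat len) (M + N) - Z.max (Z.of_nat (S a)) (M - N + 1)))); [lra|].
      apply Rmult_le_compat_l; auto. apply IZR_le. lia.
Qed.

Lemma trunc_bound x : (0 <= snd x)%Z -> forall N n M, (1 <= N)%nat ->
  Hbar_trunc B0 N x n M <= 2 * INR N * (/((INR N + cx x)*(INR N + cx x + 1)) / ffx x x).
Proof.
  intros Hx N n M HN. pose proof (fx_pos x Hx) as Hfx. pose proof (cx_ge4 x) as Hc.
  assert (HNr : 1 <= INR N) by (apply (le_INR 1); auto).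
  set (K := /((INR N + cx x)*(INR N + cx x + 1)) / ffx x x).
  assert (HK : 0 <= K).
  { unfold K. apply Rlt_le, Rdiv_lt_0_compat; auto. apply Rinv_0_lt_compat, Rmult_lt_0_compat; lra. }
  unfold Hbar_trunc. fold (sumR (seq 0 (S (2*M))) (fun i : nat =>
            let z : pt := ((Z.of_nat i - Z.of_nat M)%Z, Z.of_nat N) in
            if B0 z then 0 else hit_prob_upto (union B0 onL0) z x n)).
  apply Rle_trans with (sumR (seq 0 (S (2*M))) (fun i => if (Z.abs (Z.of_nat i - Z.of_nat M) <? Z.of_nat N)%Z then K else 0)).
  - apply sum_le. intros i. cbv zeta.
    destruct (B0 (Z.of_nat i - Z.of_nat M, Z.of_nat N)%Z) eqn:EB.
    + destruct (_ <? _)%Z; lra.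
    + assert (HF : inF (Z.of_nat i - Z.of_nat M, Z.of_nat N)%Z).
      { apply A_inF. simpl; lia. unfold AA, union, onL0. rewrite EB. simpl. apply Z.eqb_neq. lia. }
      assert (Hlt : (Z.abs (Z.of_nat i - Z.of_nat M) < Z.of_nat N)%Z).
      { unfold inF in HF; simpl in HF. pose proof (Z.pow_gt_lin_r 2 (Z.abs (Z.of_nat i - Z.of_nat M)) ltac:(lia) (Z.abs_nonneg _)). lia. }
      apply Z.ltb_lt in Hlt. rewrite Hlt.
      apply Rle_trans with (1 := main_bound x Hx n _ HF).
      unfold K, Rdiv. apply Rmult_le_compat_r. apply Rlt_le, Rinv_0_lt_compat; auto.
      unfold ffx. cbn [fst snd]. rewrite <- INR_IZR_INZ. apply fr_le. lra.
  - apply Rle_trans with (1 := count_le K (Z.of_nat M) (Z.of_nat N) HK (S (2*M)) 0).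
    replace (2 * INR N * K) with (K * (2 * INR N)) by ring. apply Rmult_le_compat_l; auto.
    replace 2 with (INR 2) by reflexivity. rewrite <- mult_INR, INR_IZR_INZ. apply IZR_le. lia.
Qed.

Lemma trunc_nonneg N x n M : 0 <= Hbar_trunc B0 N x n M.
Proof.
  unfold Hbar_trunc. fold (sumR (seq 0 (S (2*M))) (fun i : nat =>
            let z : pt := ((Z.of_nat i - Z.of_nat M)%Z, Z.of_nat N) in
            if B0 z then 0 else hit_prob_upto (union B0 onL0) z x n)).
  apply sum_nonneg. intros i. cbv zeta. destruct (B0 _); [lra|apply upto_nonneg].
Qed.

Theorem mainTheorem2 :
  forall x : pt, B0 x = true ->
  exists h : nat -> R,
    (forall N : nat, (1 <= N)%nat -> Hbar_N_is B0 N x (h N)) /\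
    Un_cv h 0.
Proof.
  intros x HB.
  assert (Hx : (0 <= snd x)%Z).
  { destruct x as [a b]; unfold B0 in HB; simpl in *. apply andb_prop in HB as [H1 _]. apply Z.leb_le in H1; auto. }
  assert (Lub : forall N, (1 <= N)%nat -> {m | is_lub (fun r => exists n M : nat, r = Hbar_trunc B0 N x n M) m}).
  { intros N HN. apply completeness.
    - exists (2 * INR N * (/((INR N + cx x)*(INR N + cx x + 1)) / ffx x x)). intros r [n [M ->]].
      apply trunc_bound; auto.
    - exists (Hbar_trunc B0 N x 0 0). exists 0%nat, 0%nat. reflexivity. }
  exists (fun N => match le_lt_dec 1 N with left H => proj1_sig (Lub N H) | right _ => 0 end).
  pose proof (fx_pos x Hx) as Hfx. pose proof (cx_ge4 x) as Hc.
  split.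
  - intros N HN. destruct (le_lt_dec 1 N) as [H|H]; [|lia]. destruct (Lub N H) as [m Hm]. exact Hm.
  - intros eps Heps.
    destruct (archimed (2 / (ffx x x * eps))) as [Hup _].
    exists (S (Z.to_nat (up (2 / (ffx x x * eps))))).
    intros N HN. destruct (le_lt_dec 1 N) as [H|H]; [|lia]. destruct (Lub N H) as [m [Hub Hlub]]. simpl.
    assert (Hm0 : 0 <= m). { apply Rle_trans with (Hbar_trunc B0 N x 0 0). apply trunc_nonneg. apply Hub. eauto. }
    assert (Hm1 : m <= 2 * INR N * (/((INR N + cx x)*(INR N + cx x + 1)) / ffx x x)).
    { apply Hlub. intros r [n [M ->]]. apply trunc_bound; auto. }
    assert (HNr : 1 <= INR N) by (apply (le_INR 1); auto).
    assert (HNbig : 2 / (ffx x x * eps) < INR N).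
    { apply Rlt_le_trans with (IZR (up (2 / (ffx x x * eps)))); auto.
      assert (0 <= 2 / (ffx x x * eps)) by (apply Rlt_le, Rdiv_lt_0_compat; [lra| apply Rmult_lt_0_compat; lra]).
      assert (0 <= up (2 / (ffx x x * eps)))%Z by (apply le_IZR; lra).
      rewrite INR_IZR_INZ. apply IZR_le. lia. }
    unfold R_dist. rewrite Rminus_0_r, Rabs_right by lra.
    set (n := INR N) in *. set (c := cx x) in *. set (F := ffx x x) in *.
    assert (E1 : 2 * n * (/ ((n + c) * (n + c + 1)) / F) <= 2 / (F * n)).
    { assert (E : 2 / (F * n) - 2 * n * (/ ((n + c) * (n + c + 1)) / F) = 2 * ((n+c)*(n+c+1) - n*n) / (F * n * ((n + c) * (n + c + 1)))).
      { field. repeat split; lra. }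
      assert (0 <= 2 * ((n+c)*(n+c+1) - n*n) / (F * n * ((n + c) * (n + c + 1)))); [|lra].
      apply Rmult_le_pos. assert (0 <= (n+c)*(n+c+1) - n*n); [|lra].
      ring_simplify. assert (0 <= n*c) by (apply Rmult_le_pos; lra). assert (0 <= c*c) by (apply Rmult_le_pos; lra). lra.
      apply Rlt_le, Rinv_0_lt_compat. repeat apply Rmult_lt_0_compat; lra. }
    assert (E2 : 2 / (F * n) < eps).
    { apply Rmult_lt_reg_l with (F * n). apply Rmult_lt_0_compat; lra.
      replace (F * n * (2 / (F * n))) with 2 by (field; split; lra).
      assert (2 / (F*eps) * (F * eps) = 2) by (field; split; lra).
      assert ((INR N - 2 / (F*eps)) * (F*eps) > 0) by (apply Rmult_gt_0_compat; [unfold n in HNbig; lra| apply Rmult_gt_0_compat; lra]).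
      unfold n in *. nra. }
    lra.
Qed.
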